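(* Let $G$ be a connected graph of order $n\geq 9$ such that $d(u)+d(v)\geq n-2$ for every pair of non-adjacent vertices $u,v\in V(G)$. Then $prc(G)=\chi'(G)$.
   Context: A path in an edge-coloured graph is a rainbow path if its edges receive pairwise distinct colours. The proper rainbow connection number $prc(G)$ of a connected graph is the minimum number of colours in a proper edge-colouring (adjacent edges get distinct colours) such that every two distinct vertices are joined by a rainbow path. $\chi'(G)$ is the chromatic index; $d(u)$ is the degree of $u$. *)

(* Defs.v *)
From mathcomp Require Import all_boot.
Set Implicit Arguments. Unset Strict Implicit. Unset Printing Implicit Defensive.

Definition simple_graph (T : finType) (e : rel T) : Prop :=
  symmetric e /\ irreflexive e.

Definition connected_graph (T : finType) (e : rel T) : Prop :=
  forall x y : T, connect e x y.

Definition deg (T : finType) (e : rel T) (u : T) : nat := #|[set v | e u v]|.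

(* An edge colouring is a function c on ordered pairs, required to be
   symmetric on edges (so it is a colouring of unordered edges {x,y}).
   It uses (at most) k colours, namely 0..k-1. *)
Definition edge_colouring (T : finType) (e : rel T) (k : nat)
    (c : T -> T -> nat) : Prop :=
  forall x y, e x y -> c x y = c y x /\ c x y < k.

Definition proper_colouring (T : finType) (e : rel T) (c : T -> T -> nat) : Prop :=
  forall x y z, e x y -> e x z -> y != z -> c x y != c x z.

Definition rainbow_path (T : finType) (e : rel T) (c : T -> T -> nat)
    (x y : T) (p : seq T) : Prop :=
  [/\ path e x p, last x p = y, uniq (x :: p) & uniq (pairmap c x p)].

Definition rainbow_connected (T : finType) (e : rel T) (c : T -> T -> nat) : Prop :=
  forall x y : T, x != y -> exists p : seq T, rainbow_path e c x y p.

Definition proper_k_colourable (T : finType) (e : rel T) (k : nat) : Prop :=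
  exists c, edge_colouring e k c /\ proper_colouring e c.

Definition proper_rainbow_k (T : finType) (e : rel T) (k : nat) : Prop :=
  exists c, [/\ edge_colouring e k c, proper_colouring e c & rainbow_connected e c].

Definition is_least (P : nat -> Prop) (k : nat) : Prop :=
  P k /\ forall j, P j -> k <= j.

Definition is_chromatic_index (T : finType) (e : rel T) (k : nat) : Prop :=
  is_least (proper_k_colourable e) k.

Definition is_prc (T : finType) (e : rel T) (k : nat) : Prop :=
  is_least (proper_rainbow_k e) k.

(* Main.v *)
Require Import Defs.
From mathcomp Require Import all_boot.
From mathcomp Require Import zify.
From Stdlib Require Import Classical.

Lemma cardsU_disj (T : finType) (A B : {set T}) :
  (forall w, w \in A -> w \in B -> False) -> #|A :|: B| = #|A| + #|B|.
Proof.
move=> H; rewrite cardsU.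
have -> : A :&: B = set0.
  apply/setP=> w; rewrite inE in_set0; apply/negP=> /andP[wa wb]; exact: H wa wb.
by rewrite cards0 subn0.
Qed.

Lemma least_exists (P : nat -> Prop) : (exists n, P n) -> exists k, is_least P k.
Proof.
have: forall m j, j <= m -> P j -> exists k, is_least P k.
  elim=> [|m IH] j jm Pj.
    exists j; split=> // i _; by move: jm; rewrite leqn0 => /eqP->.
  case: (classic (exists i, P i /\ i < j)) => [[i [Pi ij]]| no].
    apply: (IH i) => //; lia.
  exists j; split=> // i Pi; rewrite leqNgt; apply/negP=> ij; apply: no; by exists i.
move=> H [n Pn]; exact: (H n n).
Qed.

Lemma exists_col (T : finType) (e : rel T) : exists n, proper_k_colourable e n.
Proof.
exists (#|T| + #|T|).
exists (fun x y => (enum_rank x : nat) + enum_rank y); split.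
  move=> x y _; split; first by rewrite addnC.
  by rewrite -addSn leq_add // ltnW.
move=> x y z _ _ yz; rewrite eqn_add2l; apply/negP=> /eqP/val_inj/enum_rank_inj H.
by rewrite H eqxx in yz.
Qed.

Lemma cross {T : finType} {e : rel T} {S : {set T}} {x p} :
  path e x p -> x \in S -> last x p \notin S ->
  exists s t, [/\ s \in S, t \notin S & e s t].
Proof.
elim: p x => [|z p IH] x /=; first by move=> _ ->.
move=> /andP[exz pz] xS lz.
case zS: (z \in S); first exact: (IH z pz zS lz).
by exists x, z; rewrite zS.
Qed.

Lemma arith_key (p1 p2 p3 p4 p5 : nat) : p1 <= 3 -> p2 <= 3 -> p5 - 2 <= p1 + p4 ->
  p5 - 2 <= p2 + p3 -> p3 + p4 + 2 <= p5 -> 9 <= p5 -> False.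
Proof. lia. Qed.

Ltac solve_col P sym e v w1 w2 :=
  let h1 := fresh in let h2 := fresh in let h3 := fresh in
  (have h1 : e v w1 by first [done | rewrite sym; done]);
  (have h2 : e v w2 by first [done | rewrite sym; done]);
  (have h3 : w1 != w2 by first [done | rewrite eq_sym; done]);
  case: (P v w1 w2 h1 h2 h3) => *; done.

Lemma rainbow_main (T : finType) (e : rel T) (c : T -> T -> nat) :
  symmetric e -> irreflexive e -> connected_graph e -> 9 <= #|T| ->
  (forall u v : T, u != v -> ~~ e u v -> #|T| - 2 <= deg e u + deg e v) ->
  (forall x y, e x y -> c x y = c y x) -> proper_colouring e c ->
  rainbow_connected e c.
Proof.
move=> sym irr conn n9 ore cs pr.
have P : forall v w1 w2, e v w1 -> e v w2 -> w1 != w2 ->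
   [/\ c v w1 != c v w2, c w1 v != c v w2, c v w1 != c w2 v & c w1 v != c w2 v].
  move=> v w1 w2 h1 h2 h3; have := pr v w1 w2 h1 h2 h3.
  by rewrite -(cs _ _ h1) -(cs _ _ h2).
move=> x y xy.
have neq : forall u w, e u w -> u != w.
  by move=> u w euw; apply/negP=> /eqP E; rewrite E irr in euw.
case exy: (e x y).
  exists [:: y]; split => //=; [by rewrite exy | by rewrite inE xy].
case: (pickP [pred w | e x w && e w y]) => [w /andP[xw wy] | nocom].
  exists [:: w; y]; split => //=.
  - by rewrite xw wy.
  - rewrite !inE !negb_or xy (neq _ _ xw) /= andbT; exact: neq _ _ wy.
  - by rewrite inE andbT (cs _ _ xw); apply: pr; rewrite // sym.
have nc : forall w, e x w -> e y w -> False.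
  by move=> w xw yw; have := nocom w; rewrite /= xw sym yw.
set A := [set w | e x w]; set B := [set w | e y w].
have dAB : forall w, w \in A -> w \in B -> False.
  by move=> w; rewrite !inE; exact: nc.
have dxy : forall w, w \in A :|: B -> w \in [set x; y] -> False.
  move=> w; rewrite !inE => /orP[] ew /orP[] /eqP E; subst w.
  - by rewrite irr in ew.
  - by rewrite exy in ew.
  - by rewrite sym exy in ew.
  - by rewrite irr in ew.
have cardD : #|A :|: B :|: [set x; y]| = #|A| + #|B| + 2.
  by rewrite cardsU_disj // cardsU_disj // cards2 xy.
have cardle : #|A| + #|B| + 2 <= #|T| by rewrite -cardD; exact: max_card.
have degA : deg e x = #|A| by [].
have degB : deg e y = #|B| by [].
have oxy := ore x y xy (negbT exy).
have part : forall t, t != x -> t != y -> e x t || e y t.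
  move=> t tx ty; apply/negPn/negP; rewrite negb_or => /andP[nxt nyt].
  have : #|A :|: B :|: [set x; y] :|: [set t]| <= #|T| by exact: max_card.
  rewrite cardsU_disj ?cardD ?cards1; first lia.
  move=> w; rewrite !inE => + /eqP E; subst w.
  by rewrite (negbTE nxt) (negbTE nyt) (negbTE tx) (negbTE ty).
have [p pp lp] := connectP (conn x y).
have lS : last x p \notin x |: A by rewrite -lp !inE negb_or eq_sym xy exy.
have [s [t [sS tS st]]] := cross pp (setU11 x A) lS.
move: sS tS; rewrite !inE negb_or => sS /andP[tx nxt].
have xs : e x s.
  case/orP: sS => // /eqP E; subst s; by rewrite st in nxt.
have ty : t != y.
  by apply/negP=> /eqP E; subst t; apply: (nc s xs); rewrite sym.
have yt : e y t by have := part t tx ty; rewrite (negbTE nxt).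
set a := s in xs st *; set b := t in yt st tx ty nxt *.
clearbody a b.
case: (classic (exists p, rainbow_path e c x y p)) => // NR; exfalso.
have xa : x != a by exact: neq.
have yb : e b y by rewrite sym.
have xb : x != b by apply/negP=> /eqP E; subst b; rewrite sym exy in yt.
have ay : a != y by apply/negP=> /eqP E; subst a; rewrite exy in xs.
have by_ : b != y by rewrite eq_sym; exact: neq.
have ab : a != b by exact: neq.
have nay : ~~ e a y by apply/negP=> ay'; apply: (nc a xs); rewrite sym.
have nbx : ~~ e b x by apply/negP=> bx; apply: (nc b) => //; rewrite sym.
have F1 : c x a = c b y.
  apply/eqP; apply/negPn/negP=> ne; apply: NR; exists [:: a; b; y]; split => //=.
  - by rewrite xs st yb.
  - by rewrite !inE !negb_or; repeat (apply/andP; split); rewrite // 1?eq_sym //.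
  - rewrite !inE !negb_or ne /=; repeat (apply/andP; split) => //.
    + solve_col P sym e a x b.
    + solve_col P sym e b a y.
have F3 : forall b', e y b' -> e a b' -> b' = b.
  move=> b' yb' ab'; apply/eqP; apply/negPn/negP => bb.
  have xb' : x != b' by apply/negP=> /eqP E; subst b'; rewrite sym exy in yb'.
  have yb'' : e b' y by rewrite sym.
  have b'y : b' != y by rewrite eq_sym; exact: neq.
  have ab'' : a != b' by exact: neq.
  apply: NR; exists [:: a; b'; y]; split => //=.
  - by rewrite xs ab' yb''.
  - by rewrite !inE !negb_or; repeat (apply/andP; split); rewrite // 1?eq_sym //.
  - rewrite !inE !negb_or; repeat (apply/andP; split) => //.
    + solve_col P sym e a x b'.
    + rewrite F1; solve_col P sym e y b b'.
    + solve_col P sym e b' a y.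
have F4 : forall a', e x a' -> e a' a -> c x a' = c a b.
  move=> a' xa' a'a; apply/eqP; apply/negPn/negP => ne.
  have a'a1 : a' != a by exact: neq.
  have xa'' : x != a' by exact: neq.
  have a'b : a' != b by apply/negP=> /eqP E; subst a'; apply: (nc b).
  have a'y : a' != y by apply/negP=> /eqP E; subst a'; rewrite exy in xa'.
  apply: NR; exists [:: a'; a; b; y]; split => //=.
  - by rewrite xa' a'a st yb.
  - by rewrite !inE !negb_or; repeat (apply/andP; split); rewrite // 1?eq_sym //.
  - rewrite !inE !negb_or; repeat (apply/andP; split) => //.
    + solve_col P sym e a' x a.
    + rewrite -F1; solve_col P sym e x a' a.
    + solve_col P sym e a a' b.
    + rewrite -F1; solve_col P sym e a a' x.
    + solve_col P sym e b a y.
have F5 : forall b', e y b' -> e b' b -> c b' y = c a b.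
  move=> b' yb' b'b; apply/eqP; apply/negPn/negP => ne.
  have b'b1 : b' != b by exact: neq.
  have xb' : x != b' by apply/negP=> /eqP E; subst b'; rewrite sym exy in yb'.
  have yb'' : e b' y by rewrite sym.
  have ab' : a != b' by apply/negP=> /eqP E; subst b'; apply: (nc a).
  have b'y : b' != y by rewrite eq_sym; exact: neq.
  apply: NR; exists [:: a; b; b'; y]; split => //=.
  - by rewrite xs st yb'' sym b'b.
  - by rewrite !inE !negb_or; repeat (apply/andP; split); rewrite // 1?eq_sym //.
  - rewrite !inE !negb_or; repeat (apply/andP; split) => //.
    + solve_col P sym e a x b.
    + rewrite F1; solve_col P sym e b y b'.
    + rewrite F1; solve_col P sym e y b b'.
    + solve_col P sym e b a b'.
    + by rewrite eq_sym.
    + solve_col P sym e b' b y.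
have dega : deg e a <= 3.
  set Sa := [set w | e x w && (c x w == c a b)].
  have S1 : #|Sa| <= 1.
    apply/card_le1_eqP => w1 w2; rewrite !inE => /andP[x1 /eqP c1] /andP[x2 /eqP c2].
    apply/eqP; apply/negPn/negP=> w12; have := pr x w2 w1 x2 x1 w12.
    by rewrite c1 c2 eqxx.
  have sub : [set w | e a w] \subset [set x; b] :|: Sa.
    apply/subsetP=> w; rewrite !inE => aw.
    have wa : w != a by rewrite eq_sym; exact: neq.
    case wx: (w == x) => //=.
    have wy : w != y by apply/negP=> /eqP E; subst w; rewrite aw in nay.
    case/orP: (part w (negbT wx) wy) => ew.
      by rewrite ew F4 // ?eqxx ?orbT // sym.
    by rewrite (F3 w ew aw) eqxx.
  have h := subset_leq_card sub; rewrite cardsU cards2 xb /= in h.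
  rewrite /deg; apply: leq_trans h _; apply: leq_trans (leq_subr _ _) _; exact: (leq_add (leqnn 2) S1).
have degb : deg e b <= 3.
  set Sb := [set w | e y w && (c w y == c a b)].
  have S1 : #|Sb| <= 1.
    apply/card_le1_eqP => w1 w2; rewrite !inE => /andP[y1 /eqP c1] /andP[y2 /eqP c2].
    apply/eqP; apply/negPn/negP=> w12; have := pr y w2 w1 y2 y1 w12.
    by rewrite (cs _ _ y1) (cs _ _ y2) c1 c2 eqxx.
  have sub : [set w | e b w] \subset [set y; a] :|: Sb.
    apply/subsetP=> w; rewrite !inE => bw.
    have wb : w != b by rewrite eq_sym; exact: neq.
    case wy: (w == y) => //=.
    have wx : w != x by apply/negP=> /eqP E; subst w; rewrite bw in nbx.
    case/orP: (part w wx (negbT wy)) => ew.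
      have wa : w = a.
        apply/eqP; apply/negPn/negP=> wa.
        have xw : x != w by rewrite eq_sym.
        have wy' : w != y by rewrite wy.
        apply: NR; exists [:: w; b; y]; split => //=.
        - by rewrite ew sym bw yb.
        - rewrite !inE !negb_or; repeat (apply/andP; split); rewrite // 1?eq_sym //.
        - rewrite !inE !negb_or; repeat (apply/andP; split) => //.
          + solve_col P sym e w x b.
          + rewrite -F1; solve_col P sym e x w a.
          + solve_col P sym e b w y.
      by rewrite wa eqxx.
    by rewrite ew F5 // ?eqxx ?orbT // sym.
  have h := subset_leq_card sub; rewrite cardsU cards2 eq_sym ay /= in h.
  rewrite /deg; apply: leq_trans h _; apply: leq_trans (leq_subr _ _) _; exact: (leq_add (leqnn 2) S1).
have o1 := ore a y ay nay.
have bx : b != x by rewrite eq_sym.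
have o2 := ore b x bx nbx.
rewrite degB in o1; rewrite degA in o2.
exact: (@arith_key _ _ _ _ _ dega degb o1 o2 cardle n9).
Qed.

Theorem proposition5p11 (T : finType) (e : rel T) :
  simple_graph e ->
  connected_graph e ->
  9 <= #|T| ->
  (forall u v : T, u != v -> ~~ e u v -> #|T| - 2 <= deg e u + deg e v) ->
  exists k : nat, is_prc e k /\ is_chromatic_index e k.
Proof.
move=> [sym irr] conn n9 ore.
have [k [[c [ec pc]] kmin]] := @least_exists _ (@exists_col T e).
exists k; split; last by split => //; exists c.
split.
  exists c; split => //; apply: rainbow_main => //.
  by move=> x y exy; case: (ec x y exy).
move=> j [c' [ec' pc' _]]; apply: kmin; by exists c'.
Qed.
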